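(* The upper and lower Vietoris functors $\mathbb{V}^{\uparrow},\mathbb{V}^{\downarrow}\colon\mathbf{StComp}\to\mathbf{StComp}$ preserve coreflexive equalizers: if $f,g\colon X\to Y$ are perfect maps between stably compact spaces with a common retraction $k\colon Y\to X$ ($k\circ f=k\circ g=1_X$) and $h\colon E\to X$ is an equalizer of $f,g$ in $\mathbf{StComp}$, then $\mathbb{V}^{\uparrow}h$ is an equalizer of $\mathbb{V}^{\uparrow}f,\mathbb{V}^{\uparrow}g$, and $\mathbb{V}^{\downarrow}h$ is an equalizer of $\mathbb{V}^{\downarrow}f,\mathbb{V}^{\downarrow}g$, in $\mathbf{StComp}$.
   Context: A stably compact space is a $T_0$ space that is compact, locally compact, coherent (the intersection of two compact saturated sets is compact) and well-filtered. A map between stably compact spaces is perfect if it is continuous and preimages of compact saturated sets are compact saturated; $\mathbf{StComp}$ is the category of stably compact spaces and perfect maps. The order on a stably compact space is its specialization order ($x\le y$ iff every open set containing $x$ contains $y$); $\uparrow$, $\downarrow$ denote up- and down-closure. The upper Vietoris hyperspace $\mathbb{V}^{\uparrow}X$ is the set of compact saturated subsets of $X$ with topology generated by $\Box U=\{K\mid K\subseteq U\}$ ($U$ open), and $\mathbb{V}^{\uparrow}f(K)=\uparrow f[K]$. The lower Vietoris hyperspace $\mathbb{V}^{\downarrow}X$ is the set of closed subsets of $X$ with topology generated by $\Diamond U=\{C\mid C\cap U\neq\varnothing\}$ ($U$ open), and $\mathbb{V}^{\downarrow}f(C)=\downarrow f[C]$. Both are endofunctors on $\mathbf{StComp}$.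 *)

(* Defs.v *)
From Stdlib Require Import List ClassicalEpsilon FunctionalExtensionality
  PropExtensionality.
Import ListNotations.

Record space : Type := Space {
  pt :> Type;
  opn : (pt -> Prop) -> Prop;
  opn_full : opn (fun _ => True);
  opn_inter : forall U V, opn U -> opn V -> opn (fun x => U x /\ V x);
  opn_union : forall F : (pt -> Prop) -> Prop,
      (forall U, F U -> opn U) -> opn (fun x => exists U, F U /\ U x)
}.

Section Topology.
Variable X : space.

Definition subset (A B : X -> Prop) : Prop := forall x, A x -> B x.

Definition closed (C : X -> Prop) : Prop := opn X (fun x => ~ C x).

Definition spec_le (x y : X) : Prop := forall U, opn X U -> U x -> U y.

Definition up (A : X -> Prop) : X -> Prop := fun y => exists x, A x /\ spec_le x y.
Definition down (A : X -> Prop) : X -> Prop := fun y => exists x, A x /\ spec_le y x.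

Definition saturated (A : X -> Prop) : Prop :=
  forall x y, A x -> spec_le x y -> A y.

Definition compact (K : X -> Prop) : Prop :=
  forall F : (X -> Prop) -> Prop,
    (forall U, F U -> opn X U) ->
    (forall x, K x -> exists U, F U /\ U x) ->
    exists l : list (X -> Prop),
      (forall U, In U l -> F U) /\ (forall x, K x -> exists U, In U l /\ U x).

Definition compact_saturated (K : X -> Prop) : Prop := compact K /\ saturated K.

Definition T0 : Prop := forall x y, spec_le x y -> spec_le y x -> x = y.

Definition locally_compact : Prop :=
  forall x U, opn X U -> U x ->
    exists V K, opn X V /\ compact K /\ V x /\ subset V K /\ subset K U.

Definition coherent : Prop :=
  forall K1 K2, compact_saturated K1 -> compact_saturated K2 ->
    compact (fun x => K1 x /\ K2 x).

Definition well_filtered : Prop :=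
  forall F : (X -> Prop) -> Prop,
    (exists K, F K) ->
    (forall K, F K -> compact_saturated K) ->
    (forall K1 K2, F K1 -> F K2 ->
        exists K3, F K3 /\ forall x, K3 x -> K1 x /\ K2 x) ->
    forall U, opn X U ->
      (forall x, (forall K, F K -> K x) -> U x) ->
      exists K, F K /\ subset K U.

Definition stably_compact : Prop :=
  T0 /\ compact (fun _ => True) /\ locally_compact /\ coherent /\ well_filtered.

End Topology.

Arguments subset {X}.
Arguments closed {X}.
Arguments spec_le {X}.
Arguments up {X}.
Arguments down {X}.
Arguments saturated {X}.
Arguments compact {X}.
Arguments compact_saturated {X}.

Definition continuous {X Y : space} (f : X -> Y) : Prop :=
  forall V, opn Y V -> opn X (fun x => V (f x)).

Definition perfect {X Y : space} (f : X -> Y) : Prop :=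
  continuous f /\
  forall K : Y -> Prop, compact_saturated K ->
    compact_saturated (fun x => K (f x)).

Definition gen_top {T : Type} (B : (T -> Prop) -> Prop) : (T -> Prop) -> Prop :=
  fun U => forall O : (T -> Prop) -> Prop,
    O (fun _ => True) ->
    (forall U V, O U -> O V -> O (fun x => U x /\ V x)) ->
    (forall F : (T -> Prop) -> Prop, (forall U, F U -> O U) ->
        O (fun x => exists U, F U /\ U x)) ->
    (forall S, B S -> O S) -> O U.

Lemma gen_top_full {T} (B : (T -> Prop) -> Prop) : gen_top B (fun _ => True).
Proof. intros O H1 H2 H3 H4; exact H1. Qed.

Lemma gen_top_inter {T} (B : (T -> Prop) -> Prop) U V :
  gen_top B U -> gen_top B V -> gen_top B (fun x => U x /\ V x).
Proof. intros HU HV O H1 H2 H3 H4; apply H2; [apply HU|apply HV]; auto. Qed.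

Lemma gen_top_union {T} (B : (T -> Prop) -> Prop) (F : (T -> Prop) -> Prop) :
  (forall U, F U -> gen_top B U) -> gen_top B (fun x => exists U, F U /\ U x).
Proof. intros HF O H1 H2 H3 H4; apply H3; intros U HU; apply HF; auto. Qed.

Definition gen_space (T : Type) (B : (T -> Prop) -> Prop) : space :=
  @Space T (gen_top B) (gen_top_full B) (gen_top_inter B) (gen_top_union B).

Definition UpV_carrier (X : space) : Type := {K : X -> Prop | compact_saturated K}.

Definition Box {X : space} (U : X -> Prop) : UpV_carrier X -> Prop :=
  fun K => subset (proj1_sig K) U.

Definition UpV (X : space) : space :=
  gen_space (UpV_carrier X) (fun S => exists U, opn X U /\ S = Box U).

Lemma empty_compact_saturated (X : space) :
  @compact_saturated X (fun _ => False).
Proof.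
  split.
  - intros F _ _. exists nil. split; [intros U []|intros x []].
  - intros x y [].
Qed.

Definition emptyK (X : space) : UpV X :=
  exist _ (fun _ => False) (empty_compact_saturated X).

(* V^up f (K) = up (f[K]).  For continuous f this is always compact saturated;
   the else-branch (never used for perfect maps) only makes the map total. *)
Definition UpV_map {X Y : space} (f : X -> Y) (K : UpV X) : UpV Y :=
  match excluded_middle_informative
          (compact_saturated (up (fun y => exists x, proj1_sig K x /\ f x = y)))
  with
  | left p => exist _ _ p
  | right _ => emptyK Y
  end.

Definition LoV_carrier (X : space) : Type := {C : X -> Prop | closed C}.

Definition Diamond {X : space} (U : X -> Prop) : LoV_carrier X -> Prop :=
  fun C => exists x, proj1_sig C x /\ U x.

Definition LoV (X : space) : space :=
  gen_space (LoV_carrier X) (fun S => exists U, opn X U /\ S = Diamond U).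

Lemma empty_closed (X : space) : @closed X (fun _ => False).
Proof.
  unfold closed.
  replace (fun x : X => ~ False) with (fun _ : X => True).
  - apply opn_full.
  - apply functional_extensionality; intros x;
      apply propositional_extensionality; tauto.
Qed.

Definition emptyC (X : space) : LoV X := exist _ (fun _ => False) (empty_closed X).

(* V^down f (C) = down (f[C]).  For perfect maps between stably compact
   spaces this is closed; the else-branch only makes the map total. *)
Definition LoV_map {X Y : space} (f : X -> Y) (C : LoV X) : LoV Y :=
  match excluded_middle_informative
          (closed (down (fun y => exists x, proj1_sig C x /\ f x = y)))
  with
  | left p => exist _ _ p
  | right _ => emptyC Y
  end.

Definition is_StComp_equalizer {E X Y : space} (h : E -> X) (f g : X -> Y) : Prop :=
  perfect h /\ (forall e, f (h e) = g (h e)) /\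
  forall (Z : space), stably_compact Z ->
  forall m : Z -> X, perfect m -> (forall z, f (m z) = g (m z)) ->
    exists u : Z -> E, perfect u /\ (forall z, h (u z) = m z) /\
      forall u' : Z -> E, perfect u' -> (forall z, h (u' z) = m z) ->
        forall z, u' z = u z.

(* Main.v *)
Require Import Defs.
From Stdlib Require Import List Classical ClassicalEpsilon FunctionalExtensionality PropExtensionality ProofIrrelevance.
Import ListNotations.

Notation img p S := (fun y => exists x, S x /\ p x = y).

Lemma set_eq {A : Type} (P Q : A -> Prop) : (forall x, P x <-> Q x) -> P = Q.
Proof. intros H; apply functional_extensionality; intro x; apply propositional_extensionality; auto. Qed.

Lemma sig_eq {A : Type} {P : A -> Prop} (a b : {x | P x}) : proj1_sig a = proj1_sig b -> a = b.
Proof. destruct a as [a pa], b as [b pb]; simpl; intros ->; f_equal; apply proof_irrelevance. Qed.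

Lemma opn_ext (X : space) (U V : X -> Prop) : opn X U -> (forall x, U x <-> V x) -> opn X V.
Proof. intros H E. rewrite <- (set_eq U V E). exact H. Qed.

Lemma compact_ext (X : space) (U V : X -> Prop) : compact U -> (forall x, U x <-> V x) -> compact V.
Proof. intros H E. rewrite <- (set_eq U V E). exact H. Qed.

Lemma spec_refl (X : space) (x : X) : spec_le x x.
Proof. intros U _ H; exact H. Qed.

Lemma spec_trans (X : space) (x y z : X) : spec_le x y -> spec_le y z -> spec_le x z.
Proof. intros H1 H2 U HU Hx; exact (H2 U HU (H1 U HU Hx)). Qed.

Lemma opn_up (X : space) (U : X -> Prop) x y : opn X U -> U x -> spec_le x y -> U y.
Proof. intros HU Hx H; exact (H U HU Hx). Qed.

Lemma closed_down (X : space) (C : X -> Prop) x y : closed C -> C y -> spec_le x y -> C x.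
Proof.
  intros HC Cy H. destruct (classic (C x)) as [|n]; auto.
  exfalso. exact (H _ HC n Cy).
Qed.

Lemma cont_mono {X Y : space} (f : X -> Y) x y : continuous f -> spec_le x y -> spec_le (f x) (f y).
Proof. intros Hc H U HU Hfx. exact (H (fun z => U (f z)) (Hc U HU) Hfx). Qed.

Lemma cont_sat {X Y : space} (f : X -> Y) (K : Y -> Prop) : continuous f -> saturated K ->
  saturated (fun x => K (f x)).
Proof. intros Hc HK x y Kx Hxy. exact (HK _ _ Kx (cont_mono f x y Hc Hxy)). Qed.

Lemma list_lift {A B : Type} (R : A -> B -> Prop) (l : list A) :
  (forall a, In a l -> exists b, R a b) ->
  exists l', (forall a, In a l -> exists b, In b l' /\ R a b) /\
             (forall b, In b l' -> exists a, In a l /\ R a b).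
Proof.
  induction l as [|a l IH]; intros H.
  - exists nil; split; intros ? [].
  - destruct (H a (or_introl eq_refl)) as [b Hb].
    destruct IH as [l' [H1 H2]]. { intros a' Ha'; apply H; right; auto. }
    exists (b :: l'); split.
    + intros a' [<-|Ha']. exists b; split; [left|]; auto.
      destruct (H1 a' Ha') as [b' [? ?]]; exists b'; split; [right|]; auto.
    + intros b' [<-|Hb']. exists a; split; [left|]; auto.
      destruct (H2 b' Hb') as [a' [? ?]]; exists a'; split; [right|]; auto.
Qed.

Lemma compact_image {X Y : space} (f : X -> Y) (K : X -> Prop) :
  continuous f -> compact K -> compact (img f K).
Proof.
  intros Hc HK F HF Hcov.
  destruct (HK (fun V => exists U, F U /\ V = (fun x => U (f x)))) as [l [Hl1 Hl2]].
  - intros V [U [FU ->]]. apply Hc, HF, FU.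
  - intros x Kx. destruct (Hcov (f x) (ex_intro _ x (conj Kx eq_refl))) as [U [FU Ux]].
    exists (fun x => U (f x)); split; eauto.
  - destruct (list_lift (fun V U => F U /\ V = (fun x => U (f x))) l) as [l' [H1 H2]].
    { intros a Ha. destruct (Hl1 a Ha) as [U HU]; eauto. }
    exists l'; split.
    + intros U HU. destruct (H2 U HU) as [a [_ [? _]]]; auto.
    + intros y [x [Kx <-]]. destruct (Hl2 x Kx) as [V [InV Vx]].
      destruct (H1 V InV) as [U [InU [_ ->]]]. eauto.
Qed.

Lemma compact_up (X : space) (K : X -> Prop) : compact K -> compact (up K).
Proof.
  intros HK F HF Hcov.
  destruct (HK F HF) as [l [H1 H2]].
  - intros x Kx. apply Hcov. exists x; split; auto. apply spec_refl.
  - exists l; split; auto. intros y [x [Kx Hxy]].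
    destruct (H2 x Kx) as [U [InU Ux]]. exists U; split; auto.
    exact (Hxy U (HF U (H1 U InU)) Ux).
Qed.

Lemma up_saturated (X : space) (K : X -> Prop) : saturated (up K).
Proof. intros x y [z [Kz Hzx]] Hxy. exists z; split; auto. eapply spec_trans; eauto. Qed.

Lemma up_cs (X : space) (K : X -> Prop) : compact K -> compact_saturated (up K).
Proof. intros; split; [apply compact_up; auto| apply up_saturated]. Qed.

Lemma up1_cs (X : space) (x : X) : compact_saturated (fun y => spec_le x y).
Proof.
  split.
  - intros F HF Hcov. destruct (Hcov x (spec_refl X x)) as [U [FU Ux]].
    exists [U]; split. intros V [<-|[]]; auto.
    intros y Hy. exists U; split; [left; auto|]. exact (Hy U (HF U FU) Ux).
  - intros a b Ha Hb; eapply spec_trans; eauto.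
Qed.

Lemma Dlem {E X : space} (h : E -> X) : well_filtered E -> locally_compact X -> perfect h ->
  forall F, closed F -> closed (down (img h F)).
Proof.
  intros WF LC [hc hp] F HF. unfold closed.
  apply opn_ext with (U := fun x => exists V, (opn X V /\ forall y, V y -> ~ down (img h F) y) /\ V x).
  { apply opn_union. intros V [HV _]; exact HV. }
  intro x; split.
  { intros [V [[_ HV] Vx]]; exact (HV x Vx). }
  intro nDx.
  set (Fam := fun Q : E -> Prop => exists V K, opn X V /\ compact K /\ V x /\ subset V K /\
                       Q = (fun e => up K (h e))).
  destruct (WF Fam) with (U := fun e => ~ F e) as [Q [[V [K [HV [HK [Vx [VK ->]]]]]] HQ]].
  - destruct (LC x (fun _ => True) (opn_full X) I) as [V [K [HV [HK [Vx [VK _]]]]]].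
    exists (fun e => up K (h e)), V, K; repeat split; auto.
  - intros Q [V [K [HV [HK [Vx [VK ->]]]]]]. apply hp. apply up_cs; auto.
  - intros Q1 Q2 [V1 [K1 [HV1 [HK1 [Vx1 [VK1 ->]]]]]] [V2 [K2 [HV2 [HK2 [Vx2 [VK2 ->]]]]]].
    destruct (LC x (fun y => V1 y /\ V2 y) (opn_inter X _ _ HV1 HV2) (conj Vx1 Vx2))
      as [V3 [K3 [HV3 [HK3 [Vx3 [VK3 K3V]]]]]].
    exists (fun e => up K3 (h e)); split.
    + exists V3, K3; repeat split; auto.
    + intros e [z [K3z Hz]]. destruct (K3V z K3z) as [a b].
      split; exists z; split; auto.
  - exact HF.
  - intros e He Fe. apply nDx. exists (h e); split; [exists e; auto|].
    intros W HW Wx.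
    destruct (LC x W HW Wx) as [V [K [HV [HK [Vx [VK KW]]]]]].
    assert (Hu : up K (h e)).
    { apply (He (fun e => up K (h e))). exists V, K; repeat split; auto. }
    destruct Hu as [z [Kz Hz]]. exact (Hz W HW (KW z Kz)).
  - exists V; split; auto. split; auto.
    intros y Vy [z [[e [Fe <-]] Hyz]].
    apply (HQ e); auto. exists y; split; auto.
Qed.
Definition sb {T : Type} (A B : T -> Prop) := forall x, A x -> B x.

Definition gnext {T : Type} (Phi : (T -> Prop) -> Prop) (S : T -> Prop) : T -> Prop :=
  match excluded_middle_informative (exists S', Phi S' /\ sb S S' /\ ~ sb S' S) with
  | left p => proj1_sig (constructive_indefinite_description _ p)
  | right _ => S
  end.

Lemma gnext_spec {T : Type} (Phi : (T -> Prop) -> Prop) S :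
  sb S (gnext Phi S) /\ (Phi S -> Phi (gnext Phi S)) /\
  ((exists S', Phi S' /\ sb S S' /\ ~ sb S' S) -> ~ sb (gnext Phi S) S).
Proof.
  unfold gnext. destruct excluded_middle_informative as [p|n].
  - destruct (constructive_indefinite_description _ p) as [S' [H1 [H2 H3]]]; simpl.
    repeat split; auto.
  - split; [intros x; auto|split; [auto|intros H; contradiction]].
Qed.

Inductive tw {T : Type} (Phi : (T -> Prop) -> Prop) (X0 : T -> Prop) : (T -> Prop) -> Prop :=
| tw0 : tw Phi X0 X0
| tw1 : forall S, tw Phi X0 S -> tw Phi X0 (gnext Phi S)
| tw2 : forall Fm : (T -> Prop) -> Prop, (exists A, Fm A) -> (forall A, Fm A -> tw Phi X0 A) ->
        tw Phi X0 (fun x => exists A, Fm A /\ A x).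

Lemma tw_X0 {T} Phi X0 (S : T -> Prop) : tw Phi X0 S -> sb X0 S.
Proof.
  induction 1 as [|S _ IH|Fm [A FA] _ IH].
  - intros x; auto.
  - intros x Hx. apply (proj1 (gnext_spec Phi S)); auto.
  - intros x Hx. exists A; split; auto. apply IH; auto.
Qed.

Lemma tw_L1 {T} Phi X0 (c : T -> Prop) : tw Phi X0 c ->
  (forall a, tw Phi X0 a -> sb a c -> ~ sb c a -> sb (gnext Phi a) c) ->
  forall a, tw Phi X0 a -> sb a c \/ sb (gnext Phi c) a.
Proof.
  intros Hc Hext a Ha. induction Ha as [|S HS IH|Fm Hne HFm IH].
  - left; exact (tw_X0 Phi X0 c Hc).
  - destruct IH as [H|H].
    + destruct (classic (sb c S)) as [H'|H'].
      * right. assert (S = c) by (apply set_eq; intro; split; auto). subst. intros x; auto.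
      * left. apply Hext; auto.
    + right. intros x Hx. apply (proj1 (gnext_spec Phi S)); auto.
  - destruct (classic (forall A, Fm A -> sb A c)) as [H|H].
    + left. intros x [A [FA Ax]]. exact (H A FA x Ax).
    + apply not_all_ex_not in H. destruct H as [A HA].
      apply imply_to_and in HA. destruct HA as [FA nA].
      destruct (IH A FA) as [H|H]; [contradiction|].
      right. intros x Hx. exists A; split; auto.
Qed.

Lemma tw_L2 {T} Phi X0 (c : T -> Prop) : tw Phi X0 c ->
  (forall a, tw Phi X0 a -> sb a c -> ~ sb c a -> sb (gnext Phi a) c).
Proof.
  induction 1 as [|S HS IH|Fm Hne HFm IH].
  - intros a Ha H1 H2. exfalso; apply H2; exact (tw_X0 Phi X0 a Ha).
  - intros a Ha H1 H2. destruct (tw_L1 Phi X0 S HS IH a Ha) as [H|H].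
    + destruct (classic (sb S a)) as [H'|H'].
      * assert (a = S) by (apply set_eq; intro; split; auto). subst. intros x; auto.
      * intros x Hx. apply (proj1 (gnext_spec Phi S)). exact (IH a Ha H H' x Hx).
    + contradiction.
  - intros a Ha H1 H2.
    destruct (classic (exists A, Fm A /\ ~ sb (gnext Phi A) a)) as [[A [FA HA]]|H].
    + destruct (tw_L1 Phi X0 A (HFm A FA) (IH A FA) a Ha) as [Hac|Hca]; [|contradiction].
      destruct (classic (sb A a)) as [H'|H'].
      * assert (a = A) by (apply set_eq; intro; split; auto). subst.
        apply not_all_ex_not in H2. destruct H2 as [x Hx].
        apply imply_to_and in Hx. destruct Hx as [[B [FB Bx]] nAx].
        destruct (tw_L1 Phi X0 A (HFm A FA) (IH A FA) B (HFm B FB)) as [HB|HB].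
        -- exfalso; apply nAx, HB, Bx.
        -- intros y Hy. exists B; split; auto.
      * intros x Hx. exists A; split; auto. exact (IH A FA a Ha Hac H' x Hx).
    + exfalso. apply H2. intros x [A [FA Ax]].
      destruct (classic (sb (gnext Phi A) a)) as [HH|HH].
      * apply HH. apply (proj1 (gnext_spec Phi A)); auto.
      * exfalso; apply H; eauto.
Qed.

Lemma tw_chain {T} Phi X0 (a b : T -> Prop) : tw Phi X0 a -> tw Phi X0 b -> sb a b \/ sb b a.
Proof.
  intros Ha Hb. destruct (tw_L1 Phi X0 b Hb (tw_L2 Phi X0 b Hb) a Ha) as [H|H]; auto.
  right. intros x Hx. apply H. apply (proj1 (gnext_spec Phi b)); auto.
Qed.

Lemma zorn_sets {T : Type} (Phi : (T -> Prop) -> Prop) (X0 : T -> Prop) :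
  (forall Fm : (T -> Prop) -> Prop, (exists A, Fm A) -> (forall A, Fm A -> Phi A) ->
     (forall A B, Fm A -> Fm B -> sb A B \/ sb B A) -> Phi (fun x => exists A, Fm A /\ A x)) ->
  Phi X0 -> exists M, Phi M /\ sb X0 M /\ forall N, Phi N -> sb M N -> sb N M.
Proof.
  intros Hch H0.
  assert (HP : forall S, tw Phi X0 S -> Phi S).
  { induction 1 as [|S HS IH|Fm Hne HFm IH]; auto.
    - apply (proj1 (proj2 (gnext_spec Phi S))); auto.
    - apply Hch; auto. intros; apply (tw_chain Phi X0); auto. }
  set (M := fun x => exists A, tw Phi X0 A /\ A x).
  assert (HM : tw Phi X0 M) by (apply tw2; eauto; exists X0; apply tw0).
  exists M; split; [apply HP; auto|split].
  - intros x Hx; exists X0; split; auto; apply tw0.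
  - intros N HN HMN. apply NNPP; intro nN.
    apply (proj2 (proj2 (gnext_spec Phi M))). eauto.
    intros x Hx. exists (gnext Phi M); split; auto. apply tw1; auto.
Qed.

Definition chainP {X : space} (C : X -> Prop) :=
  forall a b, C a -> C b -> spec_le a b \/ spec_le b a.

Lemma chain_union_ok {X : space} (P : X -> Prop) (Fm : (X -> Prop) -> Prop) :
  (forall A, Fm A -> (forall c, A c -> P c) /\ chainP A) ->
  (forall A B, Fm A -> Fm B -> sb A B \/ sb B A) ->
  (forall c, (exists A, Fm A /\ A c) -> P c) /\ chainP (fun x => exists A, Fm A /\ A x).
Proof.
  intros H Hch; split.
  - intros c [A [FA Ac]]. exact (proj1 (H A FA) c Ac).
  - intros a b [A [FA Aa]] [B [FB Bb]].
    destruct (Hch A B FA FB) as [HAB|HBA].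
    + exact (proj2 (H B FB) a b (HAB a Aa) Bb).
    + exact (proj2 (H A FA) a b Aa (HBA b Bb)).
Qed.

Lemma min_elem (X : space) (L : X -> Prop) (x0 : X) : compact L -> L x0 ->
  exists m, L m /\ spec_le m x0 /\ forall y, L y -> spec_le y m -> spec_le m y.
Proof.
  intros HL Lx0.
  set (Phi := fun C : X -> Prop => (forall c, C c -> L c /\ spec_le c x0) /\ chainP C).
  destruct (zorn_sets Phi (fun c => c = x0)) as [M [[HM1 HM2] [HX0 Hmax]]].
  - intros Fm _ HF Hch. apply chain_union_ok; auto.
  - split. intros c ->; split; auto; apply spec_refl.
    intros a b -> ->; left; apply spec_refl.
  - assert (Hlb : exists m, L m /\ forall c, M c -> spec_le m c).
    { apply NNPP; intro Hno.
      destruct (HL (fun W => opn X W /\ exists c, M c /\ ~ W c)) as [l [Hl1 Hl2]].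
      - intros W [HW _]; exact HW.
      - intros t Lt. assert (H : ~ forall c, M c -> spec_le t c) by (intro; apply Hno; eauto).
        apply not_all_ex_not in H. destruct H as [c Hc]. apply imply_to_and in Hc.
        destruct Hc as [Mc nle]. unfold spec_le in nle.
        apply not_all_ex_not in nle. destruct nle as [U HU].
        apply imply_to_and in HU. destruct HU as [HU HU'].
        apply imply_to_and in HU'. destruct HU' as [Ut nUc].
        exists U; split; eauto.
      - assert (Hmin : forall l', (forall W, In W l' -> opn X W /\ exists c, M c /\ ~ W c) ->
                  exists c, M c /\ forall W, In W l' -> ~ W c).
        { induction l' as [|W l' IH]; intros Hw.
          - exists x0; split; [apply HX0; auto| intros ? []].
          - destruct IH as [c1 [Mc1 Hc1]]. { intros; apply Hw; right; auto. }
            destruct (Hw W (or_introl eq_refl)) as [HW [c2 [Mc2 nc2]]].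
            destruct (HM2 c1 c2 Mc1 Mc2) as [H12|H21].
            + exists c1; split; auto. intros W' [<-|HW'].
              * intro Wc1; apply nc2; exact (H12 _ HW Wc1).
              * auto.
            + exists c2; split; auto. intros W' [<-|HW']; auto.
              intro Wc2. apply (Hc1 W' HW'). destruct (Hw W' (or_intror HW')) as [HW'' _].
              exact (H21 _ HW'' Wc2). }
        destruct (Hmin l Hl1) as [c [Mc Hc]].
        destruct (Hl2 c (proj1 (HM1 c Mc))) as [W [InW Wc]].
        exact (Hc W InW Wc). }
    destruct Hlb as [m [Lm Hm]].
    exists m; split; [assumption|]; split; [apply Hm, HX0; reflexivity|].
    intros y Ly Hym.
    assert (HN : Phi (fun c => M c \/ c = y)).
    { split.
      - intros c [Mc| ->]; [apply HM1; exact Mc|]. split; [exact Ly|]. apply spec_trans with m; [exact Hym| apply Hm, HX0; reflexivity].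
      - intros a b [Ma| ->] [Mb| ->]; auto.
        + right. eapply spec_trans; eauto.
        + left. eapply spec_trans; eauto.
        + left; apply spec_refl. }
    assert (My : M y) by (apply (Hmax _ HN); auto; intros c Mc; left; auto).
    apply Hm; auto.
Qed.

Lemma max_elem (X : space) (D : X -> Prop) (x0 : X) : well_filtered X -> closed D -> D x0 ->
  exists m, D m /\ spec_le x0 m /\ forall y, D y -> spec_le m y -> spec_le y m.
Proof.
  intros WF HD Dx0.
  set (Phi := fun C : X -> Prop => (forall c, C c -> D c /\ spec_le x0 c) /\ chainP C).
  destruct (zorn_sets Phi (fun c => c = x0)) as [M [[HM1 HM2] [HX0 Hmax]]].
  - intros Fm _ HF Hch. apply chain_union_ok; auto.
  - split. intros c ->; split; auto; apply spec_refl.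
    intros a b -> ->; left; apply spec_refl.
  - assert (Hub : exists m, D m /\ forall c, M c -> spec_le c m).
    { apply NNPP; intro Hno.
      destruct (WF (fun Q => exists c, M c /\ Q = (fun y => spec_le c y))) with (U := fun y => ~ D y)
        as [Q [[c [Mc ->]] HQ]].
      - exists (fun y => spec_le x0 y); exists x0; split; auto; apply HX0; auto.
      - intros Q [c [_ ->]]; apply up1_cs.
      - intros Q1 Q2 [c1 [Mc1 ->]] [c2 [Mc2 ->]].
        destruct (HM2 c1 c2 Mc1 Mc2) as [H|H].
        + exists (fun y => spec_le c2 y); split; eauto.
          intros x Hx; split; auto; eapply spec_trans; eauto.
        + exists (fun y => spec_le c1 y); split; eauto.
          intros x Hx; split; auto; eapply spec_trans; eauto.
      - exact HD.
      - intros x Hx Dx. apply Hno. exists x; split; auto.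
        intros c Mc. apply (Hx (fun y => spec_le c y)); eauto.
      - apply (HQ c (spec_refl X c)). exact (proj1 (HM1 c Mc)). }
    destruct Hub as [m [Dm Hm]].
    exists m; split; [assumption|]; split; [apply Hm, HX0; reflexivity|].
    intros y Dy Hmy.
    assert (HN : Phi (fun c => M c \/ c = y)).
    { split.
      - intros c [Mc| ->]; [apply HM1; exact Mc|]. split; [exact Dy|]. apply spec_trans with m; [apply Hm, HX0; reflexivity|exact Hmy].
      - intros a b [Ma| ->] [Mb| ->]; auto.
        + left. eapply spec_trans; eauto.
        + right. eapply spec_trans; eauto.
        + left; apply spec_refl. }
    assert (My : M y) by (apply (Hmax _ HN); auto; intros c Mc; left; auto).
    apply Hm; auto.
Qed.

Definition sier : space.
Proof.
  refine (@Space bool (fun U => U false -> U true) _ _ _).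
  - intros _; exact I.
  - intros U V HU HV [a b]; split; auto.
  - intros F HF [U [FU Uf]]. exists U; split; auto. apply (HF U FU Uf).
Defined.

Lemma sier_compact (K : sier -> Prop) : compact K.
Proof.
  intros F HF Hcov.
  assert (Hb : forall b : bool, exists l : list (bool -> Prop), (forall U, In U l -> F U) /\
             (K b -> exists U, In U l /\ U b)).
  { intros b. destruct (classic (K b)) as [Kb|nKb].
    - destruct (Hcov b Kb) as [U [FU Ub]]. exists [U]; split.
      + intros V [<-|[]]; auto.
      + intros _; exists U; split; [left|]; auto.
    - exists nil; split; [intros ? []| intros; contradiction]. }
  destruct (Hb true) as [l1 [H1 H1']], (Hb false) as [l2 [H2 H2']].
  exists (l1 ++ l2); split.
  - intros U HU. apply in_app_or in HU. destruct HU; auto.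
  - intros [|] Kx.
    + destruct (H1' Kx) as [U [? ?]]; exists U; split; auto; apply in_or_app; auto.
    + destruct (H2' Kx) as [U [? ?]]; exists U; split; auto; apply in_or_app; auto.
Qed.

Lemma sier_ft : @spec_le sier false true.
Proof. intros U HU Uf. exact (HU Uf). Qed.

Lemma sier_tf : ~ @spec_le sier true false.
Proof.
  intros H. assert (Ho : opn sier (fun b : bool => b = true)) by (intros _; reflexivity).
  specialize (H _ Ho eq_refl). discriminate.
Qed.

Lemma sier_sc : stably_compact sier.
Proof.
  split; [|split; [|split; [|split]]].
  - intros [|] [|] H1 H2; auto; exfalso; apply sier_tf; auto.
  - apply sier_compact.
  - intros x U HU Ux. exists U, U; repeat split; auto. apply sier_compact.
    intros y; auto. intros y; auto.
  - intros K1 K2 _ _; apply sier_compact.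
  - intros Fm [K0 FK0] Hcs Hfilt U HU Hcap.
    destruct (classic (exists K, Fm K /\ ~ K true)) as [[K1 [FK1 nK1]]|H1].
    + exists K1; split; auto. intros [|] Kb; [contradiction|].
      exfalso; apply nK1. exact (proj2 (Hcs K1 FK1) false true Kb sier_ft).
    + assert (Ut : U true).
      { apply Hcap. intros K FK. apply NNPP; intro n; apply H1; eauto. }
      destruct (classic (exists K, Fm K /\ ~ K false)) as [[K2 [FK2 nK2]]|H2].
      * exists K2; split; auto. intros [|] Kb; auto; contradiction.
      * assert (Uf : U false).
        { apply Hcap. intros K FK. apply NNPP; intro n; apply H2; eauto. }
        exists K0; split; auto. intros [|] _; auto.
Qed.

Lemma sier_map_perfect (X : space) (x y : X) : spec_le x y ->
  @perfect sier X (fun b => if b then y else x).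
Proof.
  intros Hxy; split.
  - intros U HU. change (U x -> U y). intros Ux; exact (Hxy U HU Ux).
  - intros K [_ HK]. split; [apply sier_compact|].
    intros [|] [|] Ka Hab; auto.
    + exfalso; apply sier_tf; auto.
    + exact (HK x y Ka Hxy).
Qed.

Lemma perfect_cont {X Y : space} (f : X -> Y) : perfect f -> continuous f.
Proof. intros [H _]; exact H. Qed.

Lemma eq_facts {E X Y : space} (h : E -> X) (f g : X -> Y) :
  is_StComp_equalizer h f g ->
  (forall a b, h a = h b -> a = b) /\
  (forall a b, spec_le (h a) (h b) -> spec_le a b) /\
  (forall x, f x = g x -> exists e, h e = x).
Proof.
  intros [Hh [Hfg Hu]].
  assert (Hinj : forall a b, h a = h b -> a = b).
  { intros a b Hab.
    destruct (Hu sier sier_sc (fun bb => if bb then h a else h a)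
                 (sier_map_perfect X _ _ (spec_refl X (h a))))
      as [u [_ [Hu1 Hu2]]].
    { intros [|]; apply Hfg. }
    assert (E1 := Hu2 (fun bb => if bb then a else a) (sier_map_perfect E _ _ (spec_refl E a))
                      (fun z => match z with true => eq_refl | false => eq_refl end) true).
    assert (E2 := Hu2 (fun bb => if bb then b else b) (sier_map_perfect E _ _ (spec_refl E b))).
    specialize (E2 ltac:(intros [|]; simpl; symmetry; exact Hab) true).
    simpl in E1, E2. congruence. }
  split; [exact Hinj|split].
  - intros a b Hab.
    destruct (Hu sier sier_sc (fun bb => if bb then h b else h a) (sier_map_perfect X _ _ Hab))
      as [u [Hup [Hu1 _]]].
    { intros [|]; apply Hfg. }
    assert (Ht : u true = b) by (apply Hinj; exact (Hu1 true)).
    assert (Hf : u false = a) by (apply Hinj; exact (Hu1 false)).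
    rewrite <- Ht, <- Hf. apply cont_mono; [apply perfect_cont; auto| apply sier_ft].
  - intros x Hx.
    destruct (Hu sier sier_sc (fun bb => if bb then x else x)
                 (sier_map_perfect X _ _ (spec_refl X x))) as [u [_ [Hu1 _]]].
    { intros [|]; exact Hx. }
    exists (u true); exact (Hu1 true).
Qed.

Lemma gen_sub {T : Type} (B : (T -> Prop) -> Prop) S : B S -> gen_top B S.
Proof. intros HS O _ _ _ H; apply H; exact HS. Qed.

Lemma cont_into_gen (Z : space) (T : Type) (B : (T -> Prop) -> Prop) (p : Z -> T) :
  (forall S, B S -> opn Z (fun z => S (p z))) -> @continuous Z (gen_space T B) p.
Proof.
  intros H V HV. simpl in HV.
  apply (HV (fun W => opn Z (fun z => W (p z)))).
  - apply opn_full.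
  - intros U W HU HW; apply (opn_inter Z _ _ HU HW).
  - intros F HF.
    apply opn_ext with (U := fun z => exists W, (fun W' => exists U, F U /\ W' = (fun z => U (p z))) W /\ W z).
    + apply opn_union. intros W [U [FU ->]]; auto.
    + intros z; split.
      * intros [W [[U [FU ->]] Wz]]; eauto.
      * intros [U [FU Uz]]. exists (fun z => U (p z)); split; eauto.
  - exact H.
Qed.

Lemma upv_open_down (X : space) (W : UpV X -> Prop) : opn (UpV X) W ->
  forall K K' : UpV X, W K -> subset (proj1_sig K') (proj1_sig K) -> W K'.
Proof.
  intros HW. simpl in HW.
  apply (HW (fun W => forall K K' : UpV X, W K -> subset (proj1_sig K') (proj1_sig K) -> W K')); cbv beta.
  - auto.
  - intros U V HU HV K K' [H1 H2] Hs; split; [exact (HU K K' H1 Hs)|exact (HV K K' H2 Hs)].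
  - intros F HF K K' [U [FU UK]] Hs. exists U; split; [exact FU|exact (HF U FU K K' UK Hs)].
  - intros S [U [HU ->]] K K' HK Hs x Hx. apply HK, Hs, Hx.
Qed.

Lemma upv_spec (X : space) (K K' : UpV X) : subset (proj1_sig K') (proj1_sig K) -> spec_le K K'.
Proof. intros Hs W HW HK. eapply upv_open_down; eauto. Qed.

Lemma lov_open_up (X : space) (W : LoV X -> Prop) : opn (LoV X) W ->
  forall C C' : LoV X, W C -> subset (proj1_sig C) (proj1_sig C') -> W C'.
Proof.
  intros HW. simpl in HW.
  apply (HW (fun W => forall C C' : LoV X, W C -> subset (proj1_sig C) (proj1_sig C') -> W C')); cbv beta.
  - auto.
  - intros U V HU HV K K' [H1 H2] Hs; split; [exact (HU K K' H1 Hs)|exact (HV K K' H2 Hs)].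
  - intros F HF K K' [U [FU UK]] Hs. exists U; split; [exact FU|exact (HF U FU K K' UK Hs)].
  - intros S [U [HU ->]] K K' [x [Kx Ux]] Hs. exists x; split; auto.
Qed.

Lemma lov_spec (X : space) (C C' : LoV X) : subset (proj1_sig C) (proj1_sig C') -> spec_le C C'.
Proof. intros Hs W HW HC. eapply lov_open_up; eauto. Qed.

Lemma lov_spec_inv (X : space) (C C' : LoV X) : spec_le C C' -> subset (proj1_sig C) (proj1_sig C').
Proof.
  intros H x Cx. apply NNPP; intro n.
  assert (Ho : opn (LoV X) (Diamond (fun y => ~ proj1_sig C' y))).
  { apply gen_sub. exists (fun y => ~ proj1_sig C' y); split; auto. exact (proj2_sig C'). }
  destruct (H _ Ho (ex_intro _ x (conj Cx n))) as [y [C'y ny]]. contradiction.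
Qed.

Lemma upv_map_eq {X Y : space} (p : X -> Y) (K : UpV X) : continuous p ->
  proj1_sig (UpV_map p K) = up (img p (proj1_sig K)).
Proof.
  intros Hc. unfold UpV_map. destruct excluded_middle_informative as [Hk|Hn]; [reflexivity|].
  exfalso; apply Hn. apply up_cs. apply compact_image; auto. exact (proj1 (proj2_sig K)).
Qed.

Lemma lov_map_eq {X Y : space} (p : X -> Y) (C : LoV X) : well_filtered X -> locally_compact Y ->
  perfect p -> proj1_sig (LoV_map p C) = down (img p (proj1_sig C)).
Proof.
  intros WF LC Hp. unfold LoV_map. destruct excluded_middle_informative as [Hk|Hn]; [reflexivity|].
  exfalso; apply Hn. apply Dlem; auto. exact (proj2_sig C).
Qed.

Lemma basic_nbhd {T : Type} (B : (T -> Prop) -> Prop) (W : T -> Prop) : gen_top B W ->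
  forall t, W t -> exists l : list (T -> Prop), (forall S, In S l -> B S) /\
    (forall S, In S l -> S t) /\ (forall t', (forall S, In S l -> S t') -> W t').
Proof.
  intros HW.
  apply (HW (fun W => forall t, W t -> exists l : list (T -> Prop), (forall S, In S l -> B S) /\
    (forall S, In S l -> S t) /\ (forall t', (forall S, In S l -> S t') -> W t'))); cbv beta.
  - intros t _. exists nil; repeat split; intros ? []. 
  - intros U V HU HV t [Ut Vt].
    destruct (HU t Ut) as [l1 [A1 [B1 C1]]], (HV t Vt) as [l2 [A2 [B2 C2]]].
    exists (l1 ++ l2); repeat split.
    + intros S HS; apply in_app_or in HS; destruct HS as [HS|HS]; [exact (A1 S HS)|exact (A2 S HS)].
    + intros S HS; apply in_app_or in HS; destruct HS as [HS|HS]; [exact (B1 S HS)|exact (B2 S HS)].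
    + apply C1; intros S HS; apply H; apply in_or_app; auto.
    + apply C2; intros S HS; apply H; apply in_or_app; auto.
  - intros F HF t [U [FU Ut]]. destruct (HF U FU t Ut) as [l [A1 [B1 C1]]].
    exists l; repeat split; auto. intros t' Ht'. exists U; split; auto.
  - intros S BS t St. exists [S]; repeat split.
    + intros S' [<-|[]]; auto.
    + intros S' [<-|[]]; auto.
    + intros t' Ht'. apply Ht'; left; auto.
Qed.

Lemma filter_prop {A : Type} (P : A -> Prop) (l : list A) :
  exists l', (forall x, In x l' -> P x) /\ (forall x, In x l -> P x -> In x l').
Proof.
  induction l as [|a l [l' [H1 H2]]].
  - exists nil; split; [intros ? []|intros ? []].
  - destruct (classic (P a)) as [Pa|nPa].
    + exists (a :: l'); split.
      * intros x [<-|Hx]; auto.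
      * intros x [<-|Hx] Px; [left|right]; auto.
    + exists l'; split; auto. intros x [<-|Hx] Px; [contradiction|auto].
Qed.

Lemma alexander {T : Type} (B : (T -> Prop) -> Prop) (K : T -> Prop) :
  (forall Fm : (T -> Prop) -> Prop, (forall S, Fm S -> B S) -> (forall t, K t -> exists S, Fm S /\ S t) ->
     exists l, (forall S, In S l -> Fm S) /\ (forall t, K t -> exists S, In S l /\ S t)) ->
  @compact (gen_space T B) K.
Proof.
  intros H Fm HFo Hcov. apply NNPP; intro Hno.
  set (nofin := fun M : (T -> Prop) -> Prop =>
          ~ exists l, forall t, K t -> exists W, In W l /\ M W /\ W t).
  set (Phi := fun M : (T -> Prop) -> Prop => (forall W, M W -> gen_top B W) /\ nofin M).
  destruct (zorn_sets Phi Fm) as [M [[HMo HMn] [HFM Hmax]]].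
  - intros G [A0 GA0] HG Hch. split.
    + intros W [A [GA AW]]. exact (proj1 (HG A GA) W AW).
    + intros [l Hl].
      assert (Hone : forall l', exists A, G A /\ forall W, In W l' ->
                 (exists A', G A' /\ A' W) -> A W).
      { induction l' as [|W l' IH].
        - exists A0; split; auto. intros ? [].
        - destruct IH as [A1 [GA1 HA1]].
          destruct (classic (exists A', G A' /\ A' W)) as [[A2 [GA2 A2W]]|nW].
          + destruct (Hch A1 A2 GA1 GA2) as [H12|H21].
            * exists A2; split; auto. intros W' [<-|HW'] HW''; auto.
            * exists A1; split; auto. intros W' [<-|HW'] HW''; auto.
          + exists A1; split; auto. intros W' [<-|HW'] HW''; auto. contradiction. }
      destruct (Hone l) as [A [GA HA]].
      apply (proj2 (HG A GA)). exists l. intros t Kt.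
      destruct (Hl t Kt) as [W [InW [HW Wt]]]. exists W; repeat split; auto.
  - split; [intros W FW; apply HFo; auto|].
    intros [l Hl]. apply Hno.
    destruct (filter_prop Fm l) as [l' [H1 H2]].
    exists l'; split.
    + intros U HU; apply (H1 U HU).
    + intros t Kt. destruct (Hl t Kt) as [W [InW [FW Wt]]]. exists W; split; auto.
  - set (Fs := fun S => B S /\ M S).
    destruct (H Fs) as [l [Hl1 Hl2]].
    + intros S [BS _]; exact BS.
    + intros t Kt. destruct (Hcov t Kt) as [S0 [FS0 S0t]].
      assert (MS0 : M S0) by (apply HFM; auto).
      destruct (basic_nbhd B S0 (HMo S0 MS0) t S0t) as [l [Bl [lt lS0]]].
      destruct (classic (exists S, In S l /\ M S)) as [[S [InS MS]]|nS].
      * exists S; split; [split; auto|apply lt; auto].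
      * exfalso.
        assert (Hfin : forall S, In S l -> exists lS, forall t, K t -> S t \/ exists W, In W lS /\ M W /\ W t).
        { intros S InS.
          assert (nP : ~ Phi (fun W => M W \/ W = S)).
          { intros HP. assert (HMS : M S).
            { apply (Hmax _ HP). intros W MW; left; auto. right; reflexivity. }
            apply nS; eauto. }
          assert (Hnf : ~ nofin (fun W => M W \/ W = S)).
          { intro Hn. apply nP. split; auto. intros W [MW| ->]; [apply HMo; auto| apply gen_sub; apply Bl; auto]. }
          unfold nofin in Hnf. apply NNPP in Hnf. destruct Hnf as [lS HlS].
          exists lS. intros t' Kt'. destruct (HlS t' Kt') as [W [InW [[MW| ->] Wt']]].
          - right; exists W; auto.
          - left; auto. }
        assert (Hcomb : forall l0, (forall S, In S l0 -> In S l) -> exists L, forall t', K t' ->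
                   (forall S, In S l0 -> S t') \/ exists W, In W L /\ M W /\ W t').
        { induction l0 as [|S l0 IH]; intros Hsub.
          - exists nil; intros; left; intros ? [].
          - destruct (Hfin S (Hsub S (or_introl eq_refl))) as [lS HlS].
            destruct IH as [L HL]. { intros; apply Hsub; right; auto. }
            exists (lS ++ L). intros t' Kt'.
            destruct (HlS t' Kt') as [St'|[W [InW [MW Wt']]]].
            + destruct (HL t' Kt') as [Hall|[W [InW [MW Wt']]]].
              * left. intros S' [<-|HS']; [exact St'|exact (Hall S' HS')].
              * right. exists W; split; [apply in_or_app; auto|auto].
            + right. exists W; split; [apply in_or_app; auto|auto]. }
        destruct (Hcomb l (fun S H => H)) as [L HL].
        apply HMn. exists (S0 :: L). intros t' Kt'.
        destruct (HL t' Kt') as [Hall|[W [InW [MW Wt']]]].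
        -- exists S0; split; [left; auto|split; [auto| apply lS0; auto]].
        -- exists W; split; [right; auto|auto].
    + apply HMn. exists l. intros t Kt. destruct (Hl2 t Kt) as [S [InS St]].
      exists S; split; [auto|split; [exact (proj2 (Hl1 S InS))|auto]].
Qed.

Definition rU {E X : space} (h : E -> X) (hp : perfect h) (L : UpV X) : UpV E :=
  exist _ (fun e => proj1_sig L (h e)) (proj2 hp _ (proj2_sig L)).

Definition rL {E X : space} (h : E -> X) (hc : continuous h) (C : LoV X) : LoV E :=
  exist _ (fun e => proj1_sig C (h e)) (hc _ (proj2_sig C)).

Lemma box_open (X : space) (U : X -> Prop) : opn X U -> opn (UpV X) (Box U).
Proof. intros HU. apply gen_sub. exists U; auto. Qed.

Lemma diamond_open (X : space) (U : X -> Prop) : opn X U -> opn (LoV X) (Diamond U).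
Proof. intros HU. apply gen_sub. exists U; auto. Qed.

Lemma upv_map_cont {X Y : space} (p : X -> Y) : continuous p -> continuous (UpV_map p).
Proof.
  intros Hc. apply cont_into_gen. intros S [U [HU ->]].
  apply opn_ext with (U := Box (fun x => U (p x))); [apply box_open, Hc, HU|].
  intros K. unfold Box. rewrite upv_map_eq; auto. split.
  - intros H y [z [[x [Kx <-]] Hle]]. exact (opn_up Y U _ _ HU (H x Kx) Hle).
  - intros H x Kx. apply H. exists (p x); split; [exists x; auto| apply spec_refl].
Qed.

Lemma lov_map_cont {X Y : space} (p : X -> Y) : well_filtered X -> locally_compact Y ->
  perfect p -> continuous (LoV_map p).
Proof.
  intros WF LC Hp. apply cont_into_gen. intros S [U [HU ->]].
  apply opn_ext with (U := Diamond (fun x => U (p x))); [apply diamond_open, (proj1 Hp), HU|].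
  intros C. unfold Diamond. rewrite lov_map_eq; auto. split.
  - intros [x [Cx Ux]]. exists (p x); split; auto. exists (p x); split; [exists x; auto|apply spec_refl].
  - intros [y [[z [[x [Cx <-]] Hle]] Uy]]. exists x; split; auto. exact (opn_up Y U _ _ HU Uy Hle).
Qed.

Lemma rU_cont {E X : space} (h : E -> X) (hp : perfect h) : well_filtered E -> locally_compact X ->
  continuous (rU h hp).
Proof.
  intros WF LC. apply cont_into_gen. intros S [U [HU ->]].
  apply opn_ext with (U := Box (fun x => ~ down (img h (fun e => ~ U e)) x)).
  - apply box_open. apply (Dlem h WF LC hp). unfold closed.
    apply opn_ext with (U := U); auto. intros x; split; auto. intros H; apply NNPP; auto.
  - intros L. unfold Box; simpl. split.
    + intros H e Le. apply NNPP; intro nU. apply (H (h e) Le).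
      exists (h e); split; [exists e; auto|apply spec_refl].
    + intros H x Lx [y [[e [nUe <-]] Hle]]. apply nUe. apply H.
      exact (proj2 (proj2_sig L) x (h e) Lx Hle).
Qed.

Lemma upv_map_perfect {E X : space} (h : E -> X) : well_filtered E -> locally_compact X ->
  perfect h -> perfect (UpV_map h).
Proof.
  intros WF LC hp. assert (hc := proj1 hp). split; [apply upv_map_cont; auto|].
  intros Q [Qc Qs]. split; [|apply cont_sat; auto; apply upv_map_cont; auto].
  apply compact_ext with (U := up (img (rU h hp) Q)).
  - apply compact_up, compact_image; auto. apply rU_cont; auto.
  - intros K. split.
    + intros [K0 [[L [QL <-]] Hle]].
      apply (Qs (UpV_map h (rU h hp L))).
      * apply (Qs L); auto. apply upv_spec. rewrite upv_map_eq; auto.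
        intros y [z [[e [He <-]] Hle']]. exact (proj2 (proj2_sig L) _ _ He Hle').
      * apply cont_mono; auto. apply upv_map_cont; auto.
    + intros HQ. exists (rU h hp (UpV_map h K)); split; [exists (UpV_map h K); auto|].
      apply upv_spec. intros e Ke. simpl. rewrite upv_map_eq; auto.
      exists (h e); split; [exists e; auto|apply spec_refl].
Qed.

Lemma closed_union_list {E : space} (P : (E -> Prop) -> Prop) (l : list (E -> Prop)) :
  (forall U, In U l -> opn E U) -> closed (fun e => ~ exists U, In U l /\ U e).
Proof.
  intros H. unfold closed. apply opn_ext with (U := fun e => exists U, In U l /\ U e).
  - apply opn_union; auto.
  - intros e; split; auto. intros Hn; apply NNPP; auto.
Qed.

Lemma lov_map_perfect {E X : space} (h : E -> X) : well_filtered E -> locally_compact X ->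
  perfect h -> perfect (LoV_map h).
Proof.
  intros WF LC hp. assert (hc := proj1 hp). split; [apply lov_map_cont; auto|].
  intros Q [Qc Qs]. split; [|apply cont_sat; auto; apply lov_map_cont; auto].
  apply alexander. intros Fm HFm Hcov.
  set (UU := fun U => opn E U /\ Fm (Diamond U)).
  set (Ust := fun e => exists U, UU U /\ U e).
  assert (HC0 : closed (fun e => ~ Ust e)).
  { unfold closed. apply opn_ext with (U := Ust).
    - apply opn_union. intros U [HU _]; auto.
    - intros e; split; auto. intros Hn; apply NNPP; auto. }
  set (C0 := exist _ (fun e => ~ Ust e) HC0 : LoV E).
  assert (nQ : ~ Q (LoV_map h C0)).
  { intros HQ. destruct (Hcov C0 HQ) as [S [FS SC]].
    destruct (HFm S FS) as [U [HU ->]]. destruct SC as [e [nU Ue]].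
    apply nU. exists U; split; auto. split; auto. }
  assert (HD : forall D, Q D -> exists x, proj1_sig D x /\ ~ down (img h (fun e => ~ Ust e)) x).
  { intros D QD. apply NNPP; intro Hn. apply nQ. apply (Qs D); auto.
    apply lov_spec. rewrite lov_map_eq; auto. intros x Dx. apply NNPP; intro nx. apply Hn; eauto. }
  set (stuff := fun l : list (E -> Prop) => fun x => ~ down (img h (fun e => ~ exists U, In U l /\ U e)) x).
  destruct (Qc (fun W => exists l, (forall U, In U l -> UU U) /\ W = Diamond (stuff l)))
    as [Ws [HWs1 HWs2]].
  - intros W [l [Hl ->]]. apply diamond_open. apply (Dlem h WF LC hp).
    apply closed_union_list; auto. intros U HU; apply (Hl U HU).
  - intros D QD. destruct (HD D QD) as [x [Dx nx]].
    destruct (proj1 (proj2 hp _ (up1_cs X x)) UU) as [l [Hl1 Hl2]].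
    + intros U [HU _]; auto.
    + intros e He. apply NNPP; intro Hn. apply nx. exists (h e); split; [|exact He].
      exists e; split; [|reflexivity]. intros [U [UUU Ue]]. apply Hn; eauto.
    + exists (Diamond (stuff l)); split; [exists l; split; auto|].
      exists x; split; auto. intros [y [[e [ne <-]] Hle]]. apply ne. apply Hl2; auto.
  - assert (Hcomb : forall Ws', (forall W, In W Ws' -> exists l, (forall U, In U l -> UU U) /\ W = Diamond (stuff l)) ->
        exists ls, (forall U, In U ls -> UU U) /\ forall W, In W Ws' -> forall D, W D -> Diamond (stuff ls) D).
    { induction Ws' as [|W Ws' IH]; intros HW.
      - exists nil; split; [intros ? []|intros ? []].
      - destruct (HW W (or_introl eq_refl)) as [l [Hl ->]].
        destruct IH as [ls [Hls Hls2]]. { intros; apply HW; right; auto. }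
        exists (l ++ ls); split.
        + intros U HU; apply in_app_or in HU; destruct HU; auto.
        + assert (Hmono : forall l1 l2, (forall U, In U l1 -> In U l2) -> forall D, Diamond (stuff l1) D -> Diamond (stuff l2) D).
          { intros l1 l2 Hsub D [x [Dx Hx]]. exists x; split; auto.
            intros [y [[e [ne <-]] Hle]]. apply Hx. exists (h e); split; auto.
            exists e; split; auto. intros [U [InU Ue]]. apply ne; exists U; split; auto. }
          intros W' [<-|HW'] D HD'.
          * apply (Hmono l); [intros U HU; apply in_or_app; left; exact HU| exact HD'].
          * apply (Hmono ls); [intros U HU; apply in_or_app; right; exact HU| exact (Hls2 W' HW' D HD')]. }
    destruct (Hcomb Ws HWs1) as [ls [Hls1 Hls2]].
    exists (map Diamond ls); split.
    + intros S HS. apply in_map_iff in HS. destruct HS as [U [<- InU]]. apply (Hls1 U InU).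
    + intros C QC. destruct (HWs2 _ QC) as [W [InW WC]].
      destruct (Hls2 W InW _ WC) as [x [Cx nx]].
      rewrite lov_map_eq in Cx; auto. destruct Cx as [y [[c [Cc <-]] Hle]].
      destruct (classic (exists U, In U ls /\ U c)) as [[U [InU Uc]]|nc].
      * exists (Diamond U); split; [apply in_map; auto| exists c; split; auto].
      * exfalso; apply nx. exists (h c); split; auto. exists c; auto.
Qed.

Theorem proposition4p9 :
  forall (E X Y : space),
    stably_compact E -> stably_compact X -> stably_compact Y ->
  forall (f g : X -> Y) (k : Y -> X) (h : E -> X),
    perfect f -> perfect g -> perfect k ->
    (forall x, k (f x) = x) -> (forall x, k (g x) = x) ->
    is_StComp_equalizer h f g ->
    is_StComp_equalizer (UpV_map h) (UpV_map f) (UpV_map g) /\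
    is_StComp_equalizer (LoV_map h) (LoV_map f) (LoV_map g).
Proof.
  intros E X Y [T0E [cE [lcE [cohE wfE]]]] [T0X [cX [lcX [cohX wfX]]]] [T0Y [cY [lcY [cohY wfY]]]]
    f g k h fp gp kp kf kg Heq.
  destruct (eq_facts h f g Heq) as [hinj [hord hsurj]].
  destruct Heq as [hp [hfg _]].
  assert (hc := proj1 hp). assert (fc := proj1 fp). assert (gc := proj1 gp). assert (kc := proj1 kp).
  assert (hemb : forall U, opn E U -> exists U', opn X U' /\ forall e, U e <-> U' (h e)).
  { intros U HU. exists (fun x => ~ down (img h (fun e => ~ U e)) x). split.
    - apply (Dlem h wfE lcX hp). unfold closed. apply opn_ext with (U := U); auto.
      intros x; split; auto. intros H; apply NNPP; auto.
    - intros e; split.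
      + intros Ue [y [[e' [nUe' <-]] Hle]]. apply nUe'. exact (opn_up E U _ _ HU Ue (hord _ _ Hle)).
      + intros H. apply NNPP; intro nU. apply H. exists (h e); split; [exists e; auto|apply spec_refl]. }
  split.
  - assert (Vhp := upv_map_perfect h wfE lcX hp).
    split; [exact Vhp|split].
    + intros K. apply sig_eq. rewrite !upv_map_eq; auto; try (apply upv_map_cont; auto).
      assert (Hgen : forall (p q : X -> Y), (forall e, p (h e) = q (h e)) -> continuous p ->
                forall y, up (img p (up (img h (proj1_sig K)))) y -> up (img q (up (img h (proj1_sig K)))) y).
      { intros p q Hpq Hp y' [z [[x [[w [[e [Ke <-]] Hle]] <-]] Hle2]].
        exists (q (h e)); split.
        - exists (h e); split; auto. exists (h e); split; [exists e; auto|apply spec_refl].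
        - rewrite <- Hpq. apply spec_trans with (p x); [apply cont_mono; auto|exact Hle2]. }
      apply set_eq. intros y; split; apply Hgen; auto; intros; symmetry; auto.
    + intros Z scZ m mp Hm. assert (mc := proj1 mp).
      assert (key : forall L : UpV X, UpV_map f L = UpV_map g L -> forall x, proj1_sig L x ->
                exists e, proj1_sig L (h e) /\ spec_le (h e) x).
      { intros L HL x Lx.
        destruct (min_elem X (proj1_sig L) x (proj1 (proj2_sig L)) Lx) as [m0 [Lm0 [m0x Hmin]]].
        assert (HE := f_equal (@proj1_sig _ _) HL). rewrite !upv_map_eq in HE; auto.
        assert (H1 : spec_le (g m0) (f m0)).
        { assert (Hf : up (img f (proj1_sig L)) (f m0)) by (exists (f m0); split; [exists m0; auto|apply spec_refl]).
          rewrite HE in Hf. destruct Hf as [z [[y1 [Ly1 <-]] Hle]].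
          assert (Hy1 : spec_le y1 m0) by (rewrite <- (kg y1), <- (kf m0); apply cont_mono; auto).
          apply spec_trans with (g y1); auto. apply cont_mono; auto. }
        assert (H2 : spec_le (f m0) (g m0)).
        { assert (Hg : up (img g (proj1_sig L)) (g m0)) by (exists (g m0); split; [exists m0; auto|apply spec_refl]).
          rewrite <- HE in Hg. destruct Hg as [z [[y1 [Ly1 <-]] Hle]].
          assert (Hy1 : spec_le y1 m0) by (rewrite <- (kf y1), <- (kg m0); apply cont_mono; auto).
          apply spec_trans with (f y1); auto. apply cont_mono; auto. }
        destruct (hsurj m0 (T0Y _ _ H2 H1)) as [e <-]. exists e; split; auto. }
      set (u := fun z => rU h hp (m z)).
      assert (Hu : forall z, UpV_map h (u z) = m z).
      { intros z. apply sig_eq. rewrite upv_map_eq; auto. apply set_eq. intros x; split.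
        - intros [y [[e [He <-]] Hle]]. exact (proj2 (proj2_sig (m z)) _ _ He Hle).
        - intros Hx. destruct (key (m z) (Hm z) x Hx) as [e [He Hle]].
          exists (h e); split; auto. exists e; auto. }
      assert (uc : continuous u).
      { intros V HV. exact (mc _ (rU_cont h hp wfE lcX V HV)). }
      exists u; split; [split; [exact uc|]|split; [exact Hu|]].
      * intros P [Pc Ps]. split; [|apply cont_sat; auto].
        apply compact_ext with (U := fun z => up (img (UpV_map h) P) (m z)).
        -- apply (proj2 mp). apply up_cs. apply compact_image; auto. apply upv_map_cont; auto.
        -- intros z; split.
           ++ intros [K0 [[K [PK <-]] Hle]].
              apply (Ps (rU h hp (UpV_map h K))).
              ** apply (Ps K); auto. apply upv_spec. intros e He. simpl in He.
                 rewrite upv_map_eq in He; auto. destruct He as [x [[e' [Ke' <-]] Hle']].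
                 exact (proj2 (proj2_sig K) _ _ Ke' (hord _ _ Hle')).
              ** change (spec_le (rU h hp (UpV_map h K)) (rU h hp (m z))). apply (cont_mono (rU h hp)); [apply rU_cont; auto| exact Hle].
           ++ intros Pu. exists (m z); split; [exists (u z); split; auto|apply spec_refl].
      * intros u' u'p Hu' z. apply sig_eq. simpl. rewrite <- (Hu' z). rewrite upv_map_eq; auto.
        apply set_eq. intros e; split.
        -- intros He. exists (h e); split; [exists e; auto|apply spec_refl].
        -- intros [x [[e' [He' <-]] Hle]]. exact (proj2 (proj2_sig (u' z)) _ _ He' (hord _ _ Hle)).
  - assert (Vhp := lov_map_perfect h wfE lcX hp).
    split; [exact Vhp|split].
    + intros C. apply sig_eq.
      rewrite (lov_map_eq f); auto. rewrite (lov_map_eq g); auto. rewrite (lov_map_eq h); auto.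
      assert (Hgen : forall (p q : X -> Y), (forall e, p (h e) = q (h e)) -> continuous p ->
                forall y, down (img p (down (img h (proj1_sig C)))) y -> down (img q (down (img h (proj1_sig C)))) y).
      { intros p q Hpq Hp y' [z [[x [[w [[e [Ce <-]] Hle]] <-]] Hle2]].
        exists (q (h e)); split.
        - exists (h e); split; auto. exists (h e); split; [exists e; auto|apply spec_refl].
        - rewrite <- Hpq. apply spec_trans with (p x); [exact Hle2|apply cont_mono; auto]. }
      apply set_eq. intros y; split; apply Hgen; auto; intros; symmetry; auto.
    + intros Z scZ m mp Hm. assert (mc := proj1 mp).
      assert (key : forall D : LoV X, LoV_map f D = LoV_map g D -> forall x, proj1_sig D x ->
                exists e, proj1_sig D (h e) /\ spec_le x (h e)).
      { intros D HD x Dx.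
        destruct (max_elem X (proj1_sig D) x wfX (proj2_sig D) Dx) as [m0 [Dm0 [xm0 Hmax]]].
        assert (HE := f_equal (@proj1_sig _ _) HD). rewrite (lov_map_eq f), (lov_map_eq g) in HE; auto.
        assert (H1 : spec_le (f m0) (g m0)).
        { assert (Hf : down (img f (proj1_sig D)) (f m0)) by (exists (f m0); split; [exists m0; auto|apply spec_refl]).
          rewrite HE in Hf. destruct Hf as [z [[y1 [Dy1 <-]] Hle]].
          assert (Hy1 : spec_le m0 y1) by (rewrite <- (kg y1), <- (kf m0); apply cont_mono; auto).
          apply spec_trans with (g y1); auto. apply cont_mono; auto. }
        assert (H2 : spec_le (g m0) (f m0)).
        { assert (Hg : down (img g (proj1_sig D)) (g m0)) by (exists (g m0); split; [exists m0; auto|apply spec_refl]).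
          rewrite <- HE in Hg. destruct Hg as [z [[y1 [Dy1 <-]] Hle]].
          assert (Hy1 : spec_le m0 y1) by (rewrite <- (kf y1), <- (kg m0); apply cont_mono; auto).
          apply spec_trans with (f y1); auto. apply cont_mono; auto. }
        destruct (hsurj m0 (T0Y _ _ H1 H2)) as [e <-]. exists e; split; auto. }
      set (u := fun z => rL h hc (m z)).
      assert (Hu : forall z, LoV_map h (u z) = m z).
      { intros z. apply sig_eq. rewrite lov_map_eq; auto. apply set_eq. intros x; split.
        - intros [y [[e [He <-]] Hle]]. exact (closed_down X _ _ _ (proj2_sig (m z)) He Hle).
        - intros Hx. destruct (key (m z) (Hm z) x Hx) as [e [He Hle]].
          exists (h e); split; auto. exists e; auto. }
      assert (uc : continuous u).
      { apply cont_into_gen. intros S [U [HU ->]].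
        destruct (hemb U HU) as [U' [HU' HUU']].
        apply opn_ext with (U := fun z => Diamond U' (m z)).
        - apply mc. apply diamond_open; auto.
        - intros z; split.
          + intros [x [mx U'x]]. destruct (key (m z) (Hm z) x mx) as [e [He Hle]].
            exists e; split; auto. apply HUU'. exact (opn_up X U' _ _ HU' U'x Hle).
          + intros [e [He Ue]]. exists (h e); split; auto. apply HUU'; auto. }
      exists u; split; [split; [exact uc|]|split; [exact Hu|]].
      * intros P [Pc Ps]. split; [|apply cont_sat; auto].
        apply compact_ext with (U := fun z => up (img (LoV_map h) P) (m z)).
        -- apply (proj2 mp). apply up_cs. apply compact_image; auto. apply lov_map_cont; auto.
        -- intros z; split.
           ++ intros [K0 [[C [PC <-]] Hle]].
              apply (Ps C); auto. apply lov_spec. intros e Ce. simpl.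
              apply (lov_spec_inv X _ _ Hle). rewrite lov_map_eq; auto.
              exists (h e); split; [exists e; auto|apply spec_refl].
           ++ intros Pu. exists (m z); split; [exists (u z); split; auto|apply spec_refl].
      * intros u' u'p Hu' z. apply sig_eq. simpl. rewrite <- (Hu' z). rewrite lov_map_eq; auto.
        apply set_eq. intros e; split.
        -- intros He. exists (h e); split; [exists e; auto|apply spec_refl].
        -- intros [x [[e' [He' <-]] Hle]]. exact (closed_down E _ _ _ (proj2_sig (u' z)) He' (hord _ _ Hle)).
Qed.
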